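(* Let $\mathfrak{P}=(\rho_{t_0},\mathcal{E}_{t_1\leftarrow t_0},\dots,\mathcal{E}_{t_n\leftarrow t_{n-1}})$ be a multi-time quantum process over $n+1$ time steps, with fixed projective measurements $\{\Pi^{t_k}_{b_k}\}_{b_k}$ (and, for the doubled distribution, a second family $\{\Pi^{t_k}_{a_k}\}_{a_k}$) at each time $t_k$. Let $0=i_0<i_1<\dots<i_k\le n$ and let $\mathfrak{P}'=(\rho_{t_0},\mathcal{E}'_{t_{i_1}\leftarrow t_{i_0}},\dots,\mathcal{E}'_{t_{i_k}\leftarrow t_{i_{k-1}}})$ be the sub-process with the same initial state and with $$\mathcal{E}'_{t_{i_j}\leftarrow t_{i_{j-1}}}=\mathcal{E}_{t_{i_j}\leftarrow t_{i_j-1}}\circ\mathcal{E}_{t_{i_j-1}\leftarrow t_{i_j-2}}\circ\cdots\circ\mathcal{E}_{t_{i_{j-1}+1}\leftarrow t_{i_{j-1}}},$$ measured at times $t_{i_0},t_{i_1},\dots,t_{i_k}$ with the same projectors as in $\mathfrak{P}$. Then the temporal KD quasiprobability distribution (right, left, or doubled) of $\mathfrak{P}'$ equals the marginal of the corresponding temporal KD quasiprobability distribution of $\mathfrak{P}$ obtained by summing over all outcome variables at the time steps not in $\{t_{i_0},\dots,t_{i_k}\}$ (for the doubled distribution, summing over both the ket-side and bra-side outcomes at those times). Moreover, if two such sub-processes have retained time sets $S$ and $T$ with $S\cap T\neq\emptyset$, then the marginals of their temporal KD distributions onto the outcome variables at the times in $S\cap T$ coincide.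
   Context: All Hilbert spaces are finite-dimensional. A multi-time quantum process $\mathfrak{P}=(\rho_{t_0},\mathcal{E}_{t_1\leftarrow t_0},\dots,\mathcal{E}_{t_n\leftarrow t_{n-1}})$ consists of a density operator $\rho_{t_0}$ on $\mathcal{H}_{t_0}$ and completely positive trace-preserving (CPTP) maps $\mathcal{E}_{t_j\leftarrow t_{j-1}}:\mathbf{B}(\mathcal{H}_{t_{j-1}})\to\mathbf{B}(\mathcal{H}_{t_j})$, extended linearly to all (not necessarily Hermitian) operators. At each time $t_k$ a complete family of orthogonal projectors is fixed ($\sum_{b}\Pi^{t_k}_b=\mathbb{I}$, $\Pi^{t_k}_b\Pi^{t_k}_{b'}=\delta_{bb'}\Pi^{t_k}_b$). The right temporal Kirkwood–Dirac (KD) quasiprobability distribution is $$\overrightarrow{Q}_{\rm KD}(b_n,\dots,b_0)=\operatorname{Tr}\Big[\mathcal{E}_{t_n\leftarrow t_{n-1}}\Big(\cdots\mathcal{E}_{t_2\leftarrow t_1}\big(\mathcal{E}_{t_1\leftarrow t_0}(\rho_{t_0}\Pi^{t_0}_{b_0})\Pi^{t_1}_{b_1}\big)\Pi^{t_2}_{b_2}\cdots\Big)\Pi^{t_n}_{b_n}\Big],$$ the left one is $$\overleftarrow{Q}_{\rm KD}(a_n,\dots,a_0)=\operatorname{Tr}\Big[\Pi^{t_n}_{a_n}\mathcal{E}_{t_n\leftarrow t_{n-1}}\Big(\cdots\Pi^{t_1}_{a_1}\mathcal{E}_{t_1\leftarrow t_0}(\Pi^{t_0}_{a_0}\rho_{t_0})\cdots\Big)\Big],$$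 and the doubled one (ket-side projectors $\Pi^{t_k}_{a_k}$, bra-side projectors $\Pi^{t_k}_{b_k}$) is $$\overleftrightarrow{Q}_{\rm KD}(a_n,\dots,a_0;b_n,\dots,b_0)=\operatorname{Tr}\Big[\Pi^{t_n}_{a_n}\mathcal{E}_{t_n\leftarrow t_{n-1}}\Big(\cdots\Pi^{t_1}_{a_1}\mathcal{E}_{t_1\leftarrow t_0}\big(\Pi^{t_0}_{a_0}\rho_{t_0}\Pi^{t_0}_{b_0}\big)\Pi^{t_1}_{b_1}\cdots\Big)\Pi^{t_n}_{b_n}\Big].$$ *)

(* Defs.v *)
From HB Require Import structures.
From mathcomp Require Import all_boot all_order all_algebra.
From mathcomp Require Import mxtens.
Set Implicit Arguments. Unset Strict Implicit. Unset Printing Implicit Defensive.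
Import Order.TTheory GRing.Theory Num.Theory.
Local Open Scope ring_scope.

Section QuantumDefs.
Variable C : numClosedFieldType.

Definition adjmx m n (A : 'M[C]_(m, n)) : 'M[C]_(n, m) := (map_mx Num.conj A)^T.

Definition psd n (A : 'M[C]_n) : Prop :=
  forall v : 'cV[C]_n, 0 <= (adjmx v *m A *m v) 0 0.

Definition density n (rho : 'M[C]_n) : Prop := psd rho /\ \tr rho = 1.

Definition linear_map n p (E : 'M[C]_n -> 'M[C]_p) : Prop :=
  forall (a : C) (X Y : 'M[C]_n), E (a *: X + Y) = a *: E X + E Y.

(* (id_m (x) E) acting on 'M_(m * n) = operators on C^m (x) C^n *)
Definition ampl m n p (E : 'M[C]_n -> 'M[C]_p) (X : 'M[C]_(m * n)) : 'M[C]_(m * p) :=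
  \matrix_(r, s)
    E (\matrix_(j, j') X (mxtens_index ((mxtens_unindex r).1, j))
                         (mxtens_index ((mxtens_unindex s).1, j')))
      (mxtens_unindex r).2 (mxtens_unindex s).2.

Definition completely_positive n p (E : 'M[C]_n -> 'M[C]_p) : Prop :=
  forall (m : nat) (X : 'M[C]_(m * n)), psd X -> psd (@ampl m n p E X).

Definition trace_preserving n p (E : 'M[C]_n -> 'M[C]_p) : Prop :=
  forall X : 'M[C]_n, \tr (E X) = \tr X.

Definition CPTP n p (E : 'M[C]_n -> 'M[C]_p) : Prop :=
  [/\ linear_map E, completely_positive E & trace_preserving E].

Definition proj_family n (O : finType) (P : O -> 'M[C]_n) : Prop :=
  [/\ forall b, adjmx (P b) = P b,
      forall b b', P b *m P b' = if b == b' then P b else 0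
    & \sum_(b : O) P b = 1%:M].

(* A multi-time process over times t_0..t_n: dimensions d k of H_{t_k},
   initial state rho on H_{t_0}, maps E k : B(H_{t_k}) -> B(H_{t_(k+1)}). *)
Variable d : nat -> nat.

Definition process_ok (n : nat) (rho : 'M[C]_(d 0))
    (E : forall k, 'M[C]_(d k) -> 'M[C]_(d k.+1)) : Prop :=
  density rho /\ forall k, (k < n)%N -> CPTP (E k).

Section KD.
Variable n : nat.
Variable rho : 'M[C]_(d 0).
Variable E : forall k, 'M[C]_(d k) -> 'M[C]_(d k.+1).

Fixpoint kdR_op (O : nat -> finType) (P : forall k, O k -> 'M[C]_(d k))
    (b : forall k : 'I_n.+1, O k) (k : nat) : (k < n.+1)%N -> 'M[C]_(d k) :=
  match k return (k < n.+1)%N -> 'M[C]_(d k) with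
  | 0 => fun h => rho *m P 0 (b (Ordinal h))
  | k'.+1 => fun h => @E k' (@kdR_op O P b k' (ltnW h)) *m P k'.+1 (b (Ordinal h))
  end.

Definition kdR (O : nat -> finType) (P : forall k, O k -> 'M[C]_(d k))
    (b : {dffun forall k : 'I_n.+1, O k}) : C :=
  \tr (kdR_op P b (ltnSn n)).

Fixpoint kdL_op (O : nat -> finType) (P : forall k, O k -> 'M[C]_(d k))
    (a : forall k : 'I_n.+1, O k) (k : nat) : (k < n.+1)%N -> 'M[C]_(d k) :=
  match k return (k < n.+1)%N -> 'M[C]_(d k) with
  | 0 => fun h => P 0 (a (Ordinal h)) *m rho
  | k'.+1 => fun h => P k'.+1 (a (Ordinal h)) *m @E k' (@kdL_op O P a k' (ltnW h))
  end.

Definition kdL (O : nat -> finType) (P : forall k, O k -> 'M[C]_(d k))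
    (a : {dffun forall k : 'I_n.+1, O k}) : C :=
  \tr (kdL_op P a (ltnSn n)).

(* doubled KD: ket-side projectors PA (outcomes a), bra-side PB (outcomes b) *)
Fixpoint kdD_op (OA OB : nat -> finType)
    (PA : forall k, OA k -> 'M[C]_(d k)) (PB : forall k, OB k -> 'M[C]_(d k))
    (a : forall k : 'I_n.+1, OA k) (b : forall k : 'I_n.+1, OB k)
    (k : nat) : (k < n.+1)%N -> 'M[C]_(d k) :=
  match k return (k < n.+1)%N -> 'M[C]_(d k) with
  | 0 => fun h => PA 0 (a (Ordinal h)) *m rho *m PB 0 (b (Ordinal h))
  | k'.+1 => fun h => PA k'.+1 (a (Ordinal h)) *m @E k' (@kdD_op OA OB PA PB a b k' (ltnW h))
                        *m PB k'.+1 (b (Ordinal h))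
  end.

Definition kdD (OA OB : nat -> finType)
    (PA : forall k, OA k -> 'M[C]_(d k)) (PB : forall k, OB k -> 'M[C]_(d k))
    (a : {dffun forall k : 'I_n.+1, OA k}) (b : {dffun forall k : 'I_n.+1, OB k}) : C :=
  \tr (kdD_op PA PB a b (ltnSn n)).
End KD.

(* Composite channel E_{b-1} o ... o E_a : B(H_{t_a}) -> B(H_{t_b}) (identity if a = b;
   only used for a <= b). *)
Section Comp.
Variable E : forall k, 'M[C]_(d k) -> 'M[C]_(d k.+1).

Definition dcast (a b : nat) (X : 'M[C]_(d a)) : 'M[C]_(d b) :=
  match a =P b with
  | ReflectT h => castmx (f_equal d h, f_equal d h) X
  | ReflectF _ => 0
  end.

Fixpoint ecomp (a b : nat) : 'M[C]_(d a) -> 'M[C]_(d b) :=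
  if a == b then @dcast a b
  else match b return 'M[C]_(d a) -> 'M[C]_(d b) with
       | 0 => fun _ => 0
       | b'.+1 => fun X => @E b' (@ecomp a b' X)
       end.
End Comp.

(* Retained times t_{i_0}, ..., t_{i_k}, given by ts = [:: i_1; ...; i_k] (i_0 = 0 is implicit). *)
Definition rtime (n : nat) (ts : seq 'I_n.+1) (j : nat) : 'I_n.+1 :=
  nth ord0 (ord0 :: ts) j.

Definition incr_times (n : nat) (ts : seq 'I_n.+1) : bool :=
  path ltn 0%N (map val ts).

Definition sub_d (n : nat) (ts : seq 'I_n.+1) : nat -> nat := fun j => d (rtime ts j).

Definition retained (n : nat) (ts : seq 'I_n.+1) (k : 'I_n.+1) : bool :=
  k \in ord0 :: ts.

End QuantumDefs.

Definition sub_E (C : numClosedFieldType) (d : nat -> nat)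
    (E : forall k, 'M[C]_(d k) -> 'M[C]_(d k.+1)) (n : nat) (ts : seq 'I_n.+1) :
    forall j, 'M[C]_(sub_d d ts j) -> 'M[C]_(sub_d d ts j.+1) :=
  fun j => @ecomp C d E (rtime ts j) (rtime ts j.+1).

Definition sub_O (n : nat) (ts : seq 'I_n.+1) (O : nat -> finType) : nat -> finType :=
  fun j => O (rtime ts j).

Definition sub_P (C : numClosedFieldType) (d : nat -> nat) (n : nat) (ts : seq 'I_n.+1)
    (O : nat -> finType) (P : forall k, O k -> 'M[C]_(d k)) :
    forall j, sub_O ts O j -> 'M[C]_(sub_d d ts j) :=
  fun j => P (rtime ts j).

Arguments sub_E {C d} E {n} ts j _.
Arguments sub_P {C d n} ts {O} P j _.
Arguments sub_O {n} ts O j.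

Definition restricts (n : nat) (ts : seq 'I_n.+1) (O : nat -> finType)
    (b : {dffun forall k : 'I_n.+1, O k})
    (c : {dffun forall j : 'I_(size ts).+1, sub_O ts O j}) : bool :=
  [forall j : 'I_(size ts).+1, b (rtime ts j) == c j].

Definition agrees_on (n : nat) (ts ts2 : seq 'I_n.+1) (O : nat -> finType)
    (e : {dffun forall k : 'I_n.+1, O k})
    (c : {dffun forall j : 'I_(size ts).+1, sub_O ts O j}) : bool :=
  [forall j : 'I_(size ts).+1, (rtime ts j \in ord0 :: ts2) ==> (c j == e (rtime ts j))].

(* Main.v *)
Require Import Defs.
From mathcomp Require Import all_boot all_order all_algebra.
Import GRing.Theory Num.Theory.
Local Open Scope ring_scope.

Set Implicit Arguments. Unset Strict Implicit. Unset Printing Implicit Defensive.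

Section Gen.
Variable C : numClosedFieldType.
Variable d : nat -> nat.
Variable E : forall k, 'M[C]_(d k) -> 'M[C]_(d k.+1).
Variable rho : 'M[C]_(d 0).

Fixpoint Yp (post : forall m, 'M[C]_(d m) -> 'M[C]_(d m) -> 'M[C]_(d m))
   (Q : forall k, 'M[C]_(d k)) (m : nat) : 'M[C]_(d m) :=
  match m with
  | 0 => post 0 rho (Q 0)
  | m'.+1 => post m'.+1 (E (Yp post Q m')) (Q m'.+1)
  end.

Definition Qof (n : nat) (O : nat -> finType) (P : forall k, O k -> 'M[C]_(d k))
  (b : forall k : 'I_n.+1, O k) (k : nat) : 'M[C]_(d k) :=
  match (k < n.+1)%N =P true with
  | ReflectT h => P k (b (Ordinal h))
  | ReflectF _ => 0
  end.

Lemma QofE n O P b k (h : (k < n.+1)%N) : @Qof n O P b k = P k (b (Ordinal h)).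
Proof.
rewrite /Qof; case: eqP => [h'|/(_ h)//].
by rewrite (bool_irrelevance h' h).
Qed.

Lemma Yp_ext post Q Q' m : (forall k, (k <= m)%N -> Q k = Q' k) -> Yp post Q m = Yp post Q' m.
Proof.
elim: m => [|m IH] H /=; first by rewrite H.
by rewrite IH ?H // => k hk; apply: H; apply: leqW.
Qed.

Lemma kdR_Yp n O P b k h :
  @kdR_op C d n rho E O P b k h = Yp (fun m X Q => X *m Q) (Qof P b) k.
Proof.
elim: k h => [|k IH] h /=; first by rewrite QofE.
by rewrite IH QofE.
Qed.

Lemma kdL_Yp n O P b k h :
  @kdL_op C d n rho E O P b k h = Yp (fun m X Q => Q *m X) (Qof P b) k.
Proof.
elim: k h => [|k IH] h /=; first by rewrite QofE.
by rewrite IH QofE.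
Qed.

Lemma kdD_YpB n OA OB PA PB a b k h :
  @kdD_op C d n rho E OA OB PA PB a b k h
  = Yp (fun m X Q => Qof PA a m *m X *m Q) (Qof PB b) k.
Proof.
elim: k h => [|k IH] h /=; first by rewrite !QofE.
by rewrite IH !QofE.
Qed.

Lemma YpAB (QA QB : forall k, 'M[C]_(d k)) m :
  Yp (fun m X Q => QA m *m X *m Q) QB m = Yp (fun m X Q => Q *m X *m QB m) QA m.
Proof. by elim: m => [|m IH] //=; rewrite IH. Qed.

End Gen.

Unset Implicit Arguments.

Section Marg.
Variable C : numClosedFieldType.
Variable d : nat -> nat.
Variable E : forall k, 'M[C]_(d k) -> 'M[C]_(d k.+1).
Variable rho : 'M[C]_(d 0).
Variable n : nat.
Variable O : nat -> finType.
Variable P : forall k, O k -> 'M[C]_(d k).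
Variable post : forall m, 'M[C]_(d m) -> 'M[C]_(d m) -> 'M[C]_(d m).
Hypothesis postDl : forall m (X1 X2 Q : 'M[C]_(d m)), post m (X1 + X2) Q = post m X1 Q + post m X2 Q.
Hypothesis postDr : forall m (X Q1 Q2 : 'M[C]_(d m)), post m X (Q1 + Q2) = post m X Q1 + post m X Q2.
Hypothesis post0l : forall m (Q : 'M[C]_(d m)), post m 0 Q = 0.
Hypothesis post0r : forall m (X : 'M[C]_(d m)), post m X 0 = 0.
Hypothesis ED : forall m (X1 X2 : 'M[C]_(d m)), (m < n)%N -> E m (X1 + X2) = E m X1 + E m X2 :> 'M_(d m.+1).
Hypothesis E0 : forall m, (m < n)%N -> E m (0 : 'M_(d m)) = 0.
Variable ok : forall k, pred (O k).

Definition QA (k : nat) : 'M[C]_(d k) := \sum_(x | ok k x) P k x.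

Lemma post_suml m I (r : seq I) (p : pred I) F Q :
  post m (\sum_(i <- r | p i) F i) Q = \sum_(i <- r | p i) post m (F i) Q.
Proof. exact: (big_morph (fun X => post m X Q) (fun X1 X2 => postDl m X1 X2 Q) (post0l m Q)). Qed.

Lemma post_sumr m I (r : seq I) (p : pred I) F X :
  post m X (\sum_(i <- r | p i) F i) = \sum_(i <- r | p i) post m X (F i).
Proof. exact: (big_morph (fun Q => post m X Q) (postDr m X) (post0r m X)). Qed.

Lemma E_sum m I (r : seq I) (p : pred I) (F : I -> 'M_(d m)) : (m < n)%N ->
  E m (\sum_(i <- r | p i) F i) = \sum_(i <- r | p i) E m (F i).
Proof. move=> hm; exact: (big_morph (@E m) (fun X Y => ED m X Y hm) (E0 m hm)). Qed.

Definition DF := {dffun forall k : 'I_n.+1, O k}.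

Definition fixset (m : nat) (b b' : DF) : bool :=
  [forall k : 'I_n.+1, if (k < m)%N then ok k (b' k) else b' k == b k].

Definition upd (b : DF) (i : 'I_n.+1) (x : O i) : DF :=
  finfun (dfwith (fun j => b j) x).

Lemma upd_in b i x : upd b i x i = x.
Proof. by rewrite /upd ffunE dfwith_in. Qed.

Lemma upd_out b i x j : i != j -> upd b i x j = b j.
Proof. by move=> h; rewrite /upd ffunE dfwith_out. Qed.

Lemma split_sum (V : nmodType) (i : 'I_n.+1) (b : DF) (F : DF -> V) :
  \sum_(b' | fixset i.+1 b b') F b'
  = \sum_(x | ok i x) \sum_(b' | fixset i (upd b i x) b') F b'.
Proof.
rewrite (partition_big (fun b' : DF => b' i) (ok i)); last first.
  by move=> b' /forallP /(_ i); rewrite ltnSn.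
apply: eq_bigr => x okx; apply: eq_bigl => b'.
apply/idP/idP.
- case/andP => /forallP H /eqP bx; apply/forallP => k.
  case: (eqVneq i k) => [<-|nik].
    by rewrite ltnn upd_in bx.
  have := H k; rewrite upd_out // ltnS; case: ltngtP => // ek.
  by case/negP: nik; apply/eqP/val_inj; rewrite /= ek.
- move=> /forallP H.
  have bx : b' i = x by have := H i; rewrite ltnn upd_in => /eqP.
  rewrite bx eqxx andbT; apply/forallP => k.
  case: (eqVneq i k) => [<-|nik]; first by rewrite ltnSn bx.
  have := H k; rewrite upd_out // ltnS; case: ltngtP => // ek.
  by case/negP: nik; apply/eqP/val_inj; rewrite /= ek.
Qed.

Lemma fixset0 b b' : fixset 0 b b' = (b' == b).
Proof.
apply/forallP/eqP => [H|->//]; apply/ffunP => k; exact/eqP/H.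
Qed.

Lemma fixset_in m b b' (i : 'I_n.+1) : (m <= i)%N -> fixset m b b' -> b' i = b i.
Proof. by move=> hm /forallP /(_ i); rewrite ltnNge hm => /eqP. Qed.

Lemma claim m : (m < n.+1)%N -> forall b : DF,
  \sum_(b' | fixset m.+1 b b') Yp E rho post (Qof P b') m = Yp E rho post QA m.
Proof.
elim: m => [|m IH] hm b.
  rewrite (split_sum _ (Ordinal hm)) /= /QA post_sumr; apply: eq_bigr => x okx.
  rewrite (big_pred1 (upd b (Ordinal hm) x)); last by move=> b'; rewrite /= fixset0.
  by rewrite (QofE _ _ hm) upd_in.
rewrite (split_sum _ (Ordinal hm)) /= /QA post_sumr; apply: eq_bigr => x okx.
transitivity (\sum_(b' | fixset m.+1 (upd b (Ordinal hm) x) b')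
   post m.+1 (E m (Yp E rho post (Qof P b') m)) (P m.+1 x)).
  apply: eq_bigr => b' hb; rewrite (QofE _ _ hm).
  by rewrite (@fixset_in _ _ _ (Ordinal hm) _ hb) //= upd_in.
rewrite -post_suml -E_sum // IH //; exact: ltnW.
Qed.

Lemma Yp_zero k : QA k = 0 -> forall m, (k <= m)%N -> (m <= n)%N ->
  Yp E rho post QA m = 0.
Proof.
move=> Hk; elim=> [|m IH] hkm hmn /=.
  by move: hkm; rewrite leqn0 => /eqP ek; subst k; rewrite Hk post0r.
case: (eqVneq k m.+1) => [ek|nk].
  by subst k; rewrite Hk post0r.
have hkm' : (k <= m)%N by rewrite -ltnS ltn_neqAle nk hkm.
by rewrite IH // ?E0 ?post0l //; exact: ltnW.
Qed.

Lemma marginal :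
  \sum_(b : DF | [forall k : 'I_n.+1, ok k (b k)]) Yp E rho post (Qof P b) n = Yp E rho post QA n.
Proof.
case: (pickP (fun b : DF => [forall k : 'I_n.+1, ok k (b k)])) => [b0 hb0 | none].
  rewrite -(@claim n (ltnSn n) b0); apply: eq_bigl => b'.
  by rewrite /fixset; apply: eq_forallb => k; rewrite ltn_ord.
rewrite big_pred0 //.
have : ~~ [forall k : 'I_n.+1, [exists x, ok k x]].
  apply/negP => /forallP H.
  pose b : DF := finfun (fun k => xchoose (existsP (H k))).
  move: (none b) => /negP; apply; apply/forallP => k.
  by rewrite /b ffunE; exact: (xchooseP (existsP (H k))).
rewrite negb_forall => /existsP [k]; rewrite negb_exists => /forallP nk.
symmetry; apply: (@Yp_zero k) => //; last exact: leq_ord.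
by rewrite /QA big_pred0 // => x; exact/negbTE/nk.
Qed.

End Marg.


Section Times.
Variable n : nat.
Variable ts : seq 'I_n.+1.
Hypothesis Hts : incr_times ts.

Definition rr (j : nat) : nat := val (rtime ts j).

Lemma rr0 : rr 0 = 0%N. Proof. by []. Qed.

Lemma rrE j : (j <= size ts)%N -> rr j = nth 0%N (map val (ord0 :: ts)) j.
Proof. by move=> hj; rewrite (nth_map ord0). Qed.

Lemma sorted_s : sorted ltn (map val (@ord0 n :: ts)).
Proof. exact: Hts. Qed.

Lemma rr_lt i j : (i <= size ts)%N -> (j <= size ts)%N -> (i < j)%N -> (rr i < rr j)%N.
Proof.
move=> hi hj hij; rewrite !rrE //.
apply: (sorted_ltn_nth ltn_trans 0%N sorted_s) => //=; rewrite inE size_map /= ltnS //.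
Qed.

Lemma rr_mono i j : (i <= size ts)%N -> (j <= size ts)%N -> (rr i < rr j)%N = (i < j)%N.
Proof.
move=> hi hj; case: (ltngtP i j) => h.
- exact: rr_lt.
- apply/negbTE; rewrite -leqNgt; apply: ltnW; exact: rr_lt.
- by rewrite h ltnn.
Qed.

Lemma rr_inj i j : (i <= size ts)%N -> (j <= size ts)%N -> rr i = rr j -> i = j.
Proof.
move=> hi hj e; apply/eqP; rewrite eqn_leq leqNgt (leqNgt j i) -(rr_mono i j hi hj) -(rr_mono j i hj hi) e ltnn; done.
Qed.

Lemma rr_gap j k : (j < size ts)%N -> (rr j < k)%N -> (k < rr j.+1)%N ->
  forall j', (j' <= size ts)%N -> rr j' != k.
Proof.
move=> hj h1 h2 j' hj'; apply/eqP => e; subst k.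
have hj1 : (j <= size ts)%N by exact: ltnW.
rewrite (rr_mono j j' hj1 hj') in h1; rewrite (rr_mono j' j.+1 hj' hj) in h2.
by move: h1; rewrite ltnNge -ltnS h2.
Qed.

Lemma rr_after k : (rr (size ts) < k)%N ->
  forall j', (j' <= size ts)%N -> rr j' != k.
Proof.
move=> h1 j' hj'; apply/eqP => e; subst k.
by rewrite (rr_mono (size ts) j' (leqnn _) hj') ltnNge hj' in h1.
Qed.

Lemma rr_le j : (rr j <= n)%N.
Proof. by rewrite -ltnS ltn_ord. Qed.

End Times.

Section Struct.
Variable C : numClosedFieldType.
Variable d : nat -> nat.
Variable E : forall k, 'M[C]_(d k) -> 'M[C]_(d k.+1).
Variable rho : 'M[C]_(d 0).
Variable post : forall m, 'M[C]_(d m) -> 'M[C]_(d m) -> 'M[C]_(d m).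
Variable Q : forall k, 'M[C]_(d k).

Lemma dcast_id a (X : 'M[C]_(d a)) : @dcast C d a a X = X.
Proof.
rewrite /dcast; case: eqP => // h.
exact: castmx_id.
Qed.

Lemma ecompS a m (X : 'M[C]_(d a)) : a != m.+1 ->
  @ecomp C d E a m.+1 X = E m (@ecomp C d E a m X).
Proof. by move=> h /=; rewrite (negbTE h). Qed.

Local Notation Y := (Yp E rho post Q).

Lemma L1 a m : (a <= m)%N ->
  (forall k, (a < k)%N -> (k <= m)%N -> forall X, post k X (Q k) = X) ->
  Y m = @ecomp C d E a m (Y a).
Proof.
elim: m => [|m IH] ham H.
  by move: ham; rewrite leqn0 => /eqP ea; subst a; rewrite /= dcast_id.
case: (eqVneq a m.+1) => [ea|na].
  by subst a; rewrite /= eqxx dcast_id.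
have ham' : (a <= m)%N by rewrite -ltnS ltn_neqAle na ham.
rewrite ecompS // -IH //; last by move=> k h1 h2; apply: H => //; exact: leqW.
by rewrite /= H.
Qed.

Lemma L2 a b : (a < b)%N ->
  (forall k, (a < k)%N -> (k < b)%N -> forall X, post k X (Q k) = X) ->
  Y b = post b (@ecomp C d E a b (Y a)) (Q b).
Proof.
case: b => // m hab H.
have na : a != m.+1 by rewrite ltn_eqF.
rewrite (ecompS a m (Y a) na) -(L1 a m hab) //.
Qed.

Lemma L3 a m : (a <= m)%N ->
  (forall k, (a < k)%N -> (k <= m)%N -> forall X, post k X (Q k) = X) ->
  (forall k X, (a <= k)%N -> (k < m)%N -> \tr (E k X) = \tr X) ->
  \tr (Y m) = \tr (Y a).
Proof.
elim: m => [|m IH] ham H TP.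
  by move: ham; rewrite leqn0 => /eqP ea; subst a.
case: (eqVneq a m.+1) => [ea|na]; first by subst a.
have ham' : (a <= m)%N by rewrite -ltnS ltn_neqAle na ham.
rewrite /= H // TP // IH //.
  by move=> k h1 h2; apply: H => //; exact: leqW.
by move=> k X h1 h2; apply: TP => //; exact: ltnW.
Qed.

End Struct.


Section Sub.
Variable C : numClosedFieldType.
Variable d : nat -> nat.
Variable E : forall k, 'M[C]_(d k) -> 'M[C]_(d k.+1).
Variable rho : 'M[C]_(d 0).
Variable n : nat.
Variable ts : seq 'I_n.+1.
Hypothesis Hts : incr_times ts.
Variable post : forall m, 'M[C]_(d m) -> 'M[C]_(d m) -> 'M[C]_(d m).
Variable Q : forall k, 'M[C]_(d k).
Variable post' : forall j, 'M[C]_(sub_d d ts j) -> 'M[C]_(sub_d d ts j) -> 'M[C]_(sub_d d ts j).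
Variable Q' : forall j, 'M[C]_(sub_d d ts j).
Hypothesis Hpost' : forall j (X Y : 'M[C]_(sub_d d ts j)), (j <= size ts)%N ->
  post' j X Y = post (rr n ts j) X Y.
Hypothesis HQ' : forall j, (j <= size ts)%N -> Q' j = Q (rr n ts j).
Hypothesis Hdisc : forall k, (k <= n)%N -> (forall j, (j <= size ts)%N -> rr n ts j != k) ->
  forall X, post k X (Q k) = X.
Hypothesis TP : forall k X, (k < n)%N -> \tr (E k X) = \tr X.

Lemma sub_struct j : (j <= size ts)%N ->
  @Yp C (sub_d d ts) (sub_E E ts) rho post' Q' j = Yp E rho post Q (rr n ts j).
Proof.
elim: j => [|j IH] hj.
  by rewrite /= Hpost' // HQ'.
rewrite /= Hpost' // HQ' // IH ?(ltnW hj) // /sub_E.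
symmetry; apply: (L2 C d E rho post Q (rr n ts j) (rr n ts j.+1)).
  by apply: (rr_lt n ts Hts) => //; exact: ltnW.
move=> k h1 h2 X; apply: Hdisc.
  by apply: leq_trans (rr_le n ts j.+1); exact: ltnW.
exact: (rr_gap n ts Hts j k).
Qed.

Lemma sub_final :
  \tr (@Yp C (sub_d d ts) (sub_E E ts) rho post' Q' (size ts)) = \tr (Yp E rho post Q n).
Proof.
rewrite sub_struct //; symmetry; apply: L3.
- exact: rr_le.
- move=> k h1 h2 X; apply: Hdisc => //; exact: rr_after.
- move=> k X _ hk; exact: TP.
Qed.
End Sub.


Section Okdef.
Variable C : numClosedFieldType.
Variable d : nat -> nat.
Variable n : nat.
Variable ts : seq 'I_n.+1.
Hypothesis Hts : incr_times ts.
Variable O : nat -> finType.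
Variable P : forall k, O k -> 'M[C]_(d k).
Variable c : {dffun forall j : 'I_(size ts).+1, sub_O ts O j}.

Definition okc (k : nat) : pred (O k) := fun x =>
  [forall j : 'I_(size ts).+1,
     (rr n ts j == k) ==> (Tagged O x == @Tagged nat (rr n ts j) O (c j))].

Definition QAc (k : nat) : 'M[C]_(d k) := \sum_(x | okc k x) P k x.

Lemma okc_ret j (h : (j < (size ts).+1)%N) x : okc (rr n ts j) x = (x == c (Ordinal h)).
Proof.
apply/forallP/eqP => [H|->{x} j'].
  by have := H (Ordinal h); rewrite /= eqxx /= eq_Tagged /= => /eqP.
apply/implyP => /eqP e.
have ej : j' = Ordinal h.
  apply/val_inj => /=; apply: (rr_inj n ts Hts) => //; rewrite -ltnS //.
by subst j'.
Qed.

Lemma QAc_ret j : (j <= size ts)%N ->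
  @Qof C (sub_d d ts) (size ts) (sub_O ts O) (sub_P ts P) c j = QAc (rr n ts j).
Proof.
move=> hj; have h : (j < (size ts).+1)%N by [].
rewrite (QofE _ _ h) /QAc (big_pred1 (c (Ordinal h))) //.
move=> x; exact: okc_ret.
Qed.

Lemma QAc_disc k : (forall j, (j <= size ts)%N -> rr n ts j != k) -> QAc k = \sum_x P k x.
Proof.
move=> H; apply: eq_bigl => x; apply/forallP => j; apply/implyP => e.
by move: (H j (leq_ord j)); rewrite e.
Qed.

Lemma restrictsE (b : {dffun forall k : 'I_n.+1, O k}) :
  restricts b c = [forall k : 'I_n.+1, okc k (b k)].
Proof.
apply/forallP/forallP => [H k|H j].
  apply/forallP => j; apply/implyP => /eqP e.
  have ek : rtime ts j = k by apply/val_inj.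
  subst k; rewrite eq_Tagged /=; exact: H.
have := H (rtime ts j) => /forallP /(_ j); rewrite eqxx /= eq_Tagged /=.
by [].
Qed.

End Okdef.


Section Part2.
Variable n : nat.
Variable O : nat -> finType.
Variable e : {dffun forall k : 'I_n.+1, O k}.

Definition Bset (ts1 ts2 : seq 'I_n.+1) (b : {dffun forall k : 'I_n.+1, O k}) : bool :=
  [forall k : 'I_n.+1, ((k \in ord0 :: ts1) && (k \in ord0 :: ts2)) ==> (b k == e k)].

Lemma Bset_sym ts1 ts2 b : Bset ts1 ts2 b = Bset ts2 ts1 b.
Proof. by apply: eq_forallb => k; rewrite andbC. Qed.

Lemma agrees_cb ts1 ts2 (b : {dffun forall k : 'I_n.+1, O k}) :
  agrees_on ts2 e (finfun (fun j : 'I_(size ts1).+1 => b (rtime ts1 j))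
                   : {dffun forall j : 'I_(size ts1).+1, sub_O ts1 O j})
  = Bset ts1 ts2 b.
Proof.
apply/forallP/forallP => [H k|H j].
  apply/implyP => /andP [k1 k2].
  have hj : (index k (ord0 :: ts1) < (size ts1).+1)%N by rewrite -[(size ts1).+1]/(size (ord0 :: ts1)) index_mem.
  have ek : rtime ts1 (Ordinal hj) = k by rewrite /rtime nth_index.
  have G : forall k', (k' \in ord0 :: ts2) ==> (b k' == e k') -> k' = k -> b k == e k.
    by move=> k' + ek'; subst k'; rewrite k2.
  apply: (G _ _ ek); have := H (Ordinal hj); rewrite ffunE => HH; exact: HH.
apply/implyP => k2; rewrite ffunE.
have := H (rtime ts1 j) => /implyP; apply; rewrite k2 andbT.
by rewrite /rtime mem_nth.
Qed.

Lemma H2 (V : nmodType) ts1 ts2 (F : {dffun forall k : 'I_n.+1, O k} -> V) :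
  \sum_(c : {dffun forall j : 'I_(size ts1).+1, sub_O ts1 O j} | agrees_on ts2 e c)
     \sum_(b | restricts b c) F b
  = \sum_(b | Bset ts1 ts2 b) F b.
Proof.
rewrite (exchange_big_dep predT) //= [RHS]big_mkcond; apply: eq_bigr => b _.
pose cb : {dffun forall j : 'I_(size ts1).+1, sub_O ts1 O j} :=
  finfun (fun j : 'I_(size ts1).+1 => b (rtime ts1 j)).
have Hr : forall c, restricts b c = (c == cb).
  move=> c; apply/forallP/eqP => [H|->{c} j]; last by rewrite ffunE.
  by apply/ffunP => j; rewrite ffunE; apply/esym/eqP/H.
rewrite -(agrees_cb ts1 ts2 b) -/cb.
case: ifP => hag.
  rewrite (big_pred1 cb) // => c /=; rewrite Hr.
  by case: eqP => [->|_]; rewrite ?hag ?andbF.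
rewrite big_pred0 // => c; rewrite Hr; case: eqP => [->|_]; by rewrite ?hag ?andbF.
Qed.

End Part2.


Theorem lemma1 (C : numClosedFieldType) (n : nat) (d : nat -> nat)
    (rho : 'M[C]_(d 0)) (E : forall k, 'M[C]_(d k) -> 'M[C]_(d k.+1))
    (O OA OB : nat -> finType)
    (P : forall k, O k -> 'M[C]_(d k))
    (PA : forall k, OA k -> 'M[C]_(d k))
    (PB : forall k, OB k -> 'M[C]_(d k)) :
  process_ok n rho E ->
  (forall k : 'I_n.+1, proj_family (P k)) ->
  (forall k : 'I_n.+1, proj_family (PA k)) ->
  (forall k : 'I_n.+1, proj_family (PB k)) ->
  (forall ts : seq 'I_n.+1, incr_times ts ->
     (forall c : {dffun forall j : 'I_(size ts).+1, sub_O ts O j},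
        kdR rho (sub_E E ts) (sub_P ts P) c
        = \sum_(b | restricts b c) kdR rho E P b)
     /\ (forall c : {dffun forall j : 'I_(size ts).+1, sub_O ts OA j},
        kdL rho (sub_E E ts) (sub_P ts PA) c
        = \sum_(a | restricts a c) kdL rho E PA a)
     /\ (forall (ca : {dffun forall j : 'I_(size ts).+1, sub_O ts OA j})
                (cb : {dffun forall j : 'I_(size ts).+1, sub_O ts OB j}),
        kdD rho (sub_E E ts) (sub_P ts PA) (sub_P ts PB) ca cb
        = \sum_(a | restricts a ca) \sum_(b | restricts b cb) kdD rho E PA PB a b))
  /\
  (forall ts1 ts2 : seq 'I_n.+1, incr_times ts1 -> incr_times ts2 ->
     has (fun k => k \in ord0 :: ts2) (ord0 :: ts1) ->
     (forall e : {dffun forall k : 'I_n.+1, O k},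
        \sum_(c | agrees_on ts2 e c) kdR rho (sub_E E ts1) (sub_P ts1 P) c
        = \sum_(c | agrees_on ts1 e c) kdR rho (sub_E E ts2) (sub_P ts2 P) c)
     /\ (forall e : {dffun forall k : 'I_n.+1, OA k},
        \sum_(c | agrees_on ts2 e c) kdL rho (sub_E E ts1) (sub_P ts1 PA) c
        = \sum_(c | agrees_on ts1 e c) kdL rho (sub_E E ts2) (sub_P ts2 PA) c)
     /\ (forall (ea : {dffun forall k : 'I_n.+1, OA k})
                (eb : {dffun forall k : 'I_n.+1, OB k}),
        \sum_(ca | agrees_on ts2 ea ca) \sum_(cb | agrees_on ts2 eb cb)
           kdD rho (sub_E E ts1) (sub_P ts1 PA) (sub_P ts1 PB) ca cb
        = \sum_(ca | agrees_on ts1 ea ca) \sum_(cb | agrees_on ts1 eb cb)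
           kdD rho (sub_E E ts2) (sub_P ts2 PA) (sub_P ts2 PB) ca cb)).
Proof.
move=> [_ Hcp] HP HPA HPB.
have ED : forall m (X1 X2 : 'M[C]_(d m)), (m < n)%N -> E m (X1 + X2) = E m X1 + E m X2.
  move=> m X1 X2 hm; case: (Hcp m hm) => lin _ _.
  by have := lin 1 X1 X2; rewrite !scale1r.
have E0 : forall m, (m < n)%N -> E m (0 : 'M[C]_(d m)) = 0.
  move=> m hm; case: (Hcp m hm) => lin _ _.
  by have := lin (-1) 0 0; rewrite scaler0 addr0 scaleN1r addNr.
have TP : forall k X, (k < n)%N -> \tr (E k X) = \tr X.
  by move=> k X hk; case: (Hcp k hk).
have Psum : forall (O' : nat -> finType) (P' : forall k, O' k -> 'M[C]_(d k)),
    (forall k : 'I_n.+1, proj_family (P' k)) ->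
    forall k, (k <= n)%N -> \sum_x P' k x = 1%:M.
  move=> O' P' HP' k hk.
  by case: (HP' (Ordinal (hk : (k < n.+1)%N))).
have part1 : forall ts : seq 'I_n.+1, incr_times ts ->
     (forall c : {dffun forall j : 'I_(size ts).+1, sub_O ts O j},
        kdR rho (sub_E E ts) (sub_P ts P) c
        = \sum_(b | restricts b c) kdR rho E P b)
     /\ (forall c : {dffun forall j : 'I_(size ts).+1, sub_O ts OA j},
        kdL rho (sub_E E ts) (sub_P ts PA) c
        = \sum_(a | restricts a c) kdL rho E PA a)
     /\ (forall (ca : {dffun forall j : 'I_(size ts).+1, sub_O ts OA j})
                (cb : {dffun forall j : 'I_(size ts).+1, sub_O ts OB j}),
        kdD rho (sub_E E ts) (sub_P ts PA) (sub_P ts PB) ca cb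
        = \sum_(a | restricts a ca) \sum_(b | restricts b cb) kdD rho E PA PB a b).
  move=> ts Hts; split; [|split].
  - move=> c.
    transitivity (\tr (Yp E rho (fun m X Q => X *m Q) (QAc C d n ts O P c) n)).
      rewrite /kdR kdR_Yp.
      apply: (sub_final C d E rho n ts Hts) => //.
      + move=> j hj; exact: QAc_ret.
      + move=> k hk hdisc X; rewrite QAc_disc // Psum //; exact: mulmx1.
    have := marginal C d E rho n O P (fun m X Q => X *m Q)
      (fun m X1 X2 Q => mulmxDl X1 X2 Q) (fun m X Q1 Q2 => mulmxDr X Q1 Q2)
      (fun m Q => mul0mx _ Q) (fun m X => mulmx0 _ X) ED E0 (okc n ts O c).
    rewrite /QA /QAc => <-; rewrite raddf_sum.
    apply: eq_big => b; first by rewrite restrictsE.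
    by move=> _; rewrite /kdR kdR_Yp.
  - move=> c.
    transitivity (\tr (Yp E rho (fun m X Q => Q *m X) (QAc C d n ts OA PA c) n)).
      rewrite /kdL kdL_Yp.
      apply: (sub_final C d E rho n ts Hts) => //.
      + move=> j hj; exact: QAc_ret.
      + move=> k hk hdisc X; rewrite QAc_disc // Psum //; exact: mul1mx.
    have := marginal C d E rho n OA PA (fun m X Q => Q *m X)
      (fun m X1 X2 Q => mulmxDr Q X1 X2) (fun m X Q1 Q2 => mulmxDl Q1 Q2 X)
      (fun m Q => mulmx0 _ Q) (fun m X => mul0mx _ X) ED E0 (okc n ts OA c).
    rewrite /QA /QAc => <-; rewrite raddf_sum.
    apply: eq_big => b; first by rewrite restrictsE.
    by move=> _; rewrite /kdL kdL_Yp.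
  - move=> ca cb.
    transitivity (\tr (Yp E rho (fun m X Q => QAc C d n ts OA PA ca m *m X *m Q)
                        (QAc C d n ts OB PB cb) n)).
      rewrite /kdD kdD_YpB.
      apply: (sub_final C d E rho n ts Hts) => //.
      + by move=> j X Y hj; rewrite QAc_ret.
      + move=> j hj; exact: QAc_ret.
      + move=> k hk hdisc X; rewrite !QAc_disc // !Psum //.
        by rewrite mul1mx mulmx1.
    rewrite YpAB.
    have step1 : forall a : {dffun forall k : 'I_n.+1, OA k},
        \sum_(b | restricts b cb) kdD rho E PA PB a b
        = \tr (Yp E rho (fun m X Q => Q *m X *m QAc C d n ts OB PB cb m) (Qof PA a) n).
      move=> a; rewrite -YpAB.
      have := marginal C d E rho n OB PB (fun m X Q => Qof PA a m *m X *m Q)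
        (fun m X1 X2 Q => ltac:(by rewrite /= mulmxDr mulmxDl))
        (fun m X Q1 Q2 => ltac:(by rewrite /= mulmxDr))
        (fun m Q => ltac:(by rewrite /= mulmx0 mul0mx)) (fun m X => ltac:(by rewrite /= mulmx0))
        ED E0 (okc n ts OB cb).
      rewrite /QA /QAc => <-; rewrite raddf_sum.
      apply: eq_big => b; first by rewrite restrictsE.
      by move=> _; rewrite /kdD kdD_YpB.
    under eq_bigr => a _ do rewrite step1.
    have := marginal C d E rho n OA PA (fun m X Q => Q *m X *m QAc C d n ts OB PB cb m)
        (fun m X1 X2 Q => ltac:(by rewrite /= mulmxDr mulmxDl))
        (fun m X Q1 Q2 => ltac:(by rewrite /= !mulmxDl))
        (fun m Q => ltac:(by rewrite /= mulmx0 mul0mx)) (fun m X => ltac:(by rewrite /= !mul0mx))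
        ED E0 (okc n ts OA ca).
    rewrite /QA => <-; rewrite raddf_sum.
    by apply: eq_bigl => a; rewrite restrictsE.
split; first exact: part1.
move=> ts1 ts2 H1 H2' _.
have [R1 [L1 D1]] := part1 ts1 H1.
have [R2 [L2 D2]] := part1 ts2 H2'.
have DD : forall (tsx tsy : seq 'I_n.+1) (ea : {dffun forall k : 'I_n.+1, OA k})
    (eb : {dffun forall k : 'I_n.+1, OB k}),
  \sum_(ca : {dffun forall j : 'I_(size tsx).+1, sub_O tsx OA j} | agrees_on tsy ea ca)
   \sum_(cb : {dffun forall j : 'I_(size tsx).+1, sub_O tsx OB j} | agrees_on tsy eb cb)
    \sum_(a | restricts a ca) \sum_(b | restricts b cb) kdD rho E PA PB a b
  = \sum_(a | Bset n OA ea tsx tsy a) \sum_(b | Bset n OB eb tsx tsy b) kdD rho E PA PB a b.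
  move=> tsx tsy ea eb.
  transitivity (\sum_(ca : {dffun forall j : 'I_(size tsx).+1, sub_O tsx OA j} | agrees_on tsy ea ca)
     \sum_(a | restricts a ca) \sum_(b | Bset n OB eb tsx tsy b) kdD rho E PA PB a b).
    apply: eq_bigr => ca _; rewrite exchange_big; apply: eq_bigr => a _.
    exact: H2.
  exact: H2.
split; [|split].
- move=> e.
  under eq_bigr => c _ do rewrite R1.
  under [RHS]eq_bigr => c _ do rewrite R2.
  by rewrite !H2; apply: eq_bigl => b; rewrite Bset_sym.
- move=> e.
  under eq_bigr => c _ do rewrite L1.
  under [RHS]eq_bigr => c _ do rewrite L2.
  by rewrite !H2; apply: eq_bigl => b; rewrite Bset_sym.
- move=> ea eb.
  under eq_bigr => ca _ do under eq_bigr => cb _ do rewrite D1.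
  under [RHS]eq_bigr => ca _ do under eq_bigr => cb _ do rewrite D2.
  rewrite !DD; apply: eq_big => a; first by rewrite Bset_sym.
  by move=> _; apply: eq_bigl => b; rewrite Bset_sym.
Qed.
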